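(* Let $f(t)=e^{-t}/(-\log(1-e^{-t}))$ for $t>0$. Then, as $x\to\infty$, $$\int_0^{x}\log\big(1+(x-t)f(t)\big)\,f(t)\,dt=x\log x-x+O(\log x).$$ *)

(* Defs.v *)
From Stdlib Require Import Reals.
From Coquelicot Require Import Coquelicot.
Open Scope R_scope.

Definition f (t : R) : R := exp (- t) / (- ln (1 - exp (- t))).

Definition integrand (x t : R) : R := ln (1 + (x - t) * f t) * f t.

(* Main.v *)
Require Import Defs.
From Stdlib Require Import Reals.
From Coquelicot Require Import Coquelicot.
Open Scope R_scope.

From Stdlib Require Import Lra Psatz.

Lemma exp_ge1 z : 1 + z <= exp z.
Proof.
destruct (Req_dec z 0) as [->|H]. rewrite exp_0; lra.
left; apply exp_ineq1; auto.
Qed.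

Lemma ln_le_sub1 y : 0 < y -> ln y <= y - 1.
Proof. intros Hy. pose proof (exp_ge1 (ln y)). rewrite exp_ln in H; lra. Qed.

Lemma f_facts t : 0 < t ->
  0 < exp (-t) < 1 /\ 1 - exp (- t) <= Defs.f t <= 1 /\ 0 < Defs.f t.
Proof.
intros Ht. unfold Defs.f.
set (u := exp (-t)).
assert (Hu0 : 0 < u) by apply exp_pos.
assert (Hu1 : u < 1) by (unfold u; rewrite <- exp_0; apply exp_increasing; lra).
set (v := - ln (1 - u)).
assert (Hv0 : 0 < v) by (unfold v; assert (ln (1-u) < ln 1) by (apply ln_increasing; lra); rewrite ln_1 in H; lra).
assert (Hvu : u <= v) by (unfold v; pose proof (ln_le_sub1 (1-u)); lra).
assert (Hv2 : (1-u) * v <= u).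
{ unfold v. rewrite <- ln_Rinv by lra.
  pose proof (ln_le_sub1 (/ (1-u))).
  assert (0 < / (1-u)) by (apply Rinv_0_lt_compat; lra).
  assert ((1-u) * / (1-u) = 1) by (field; lra).
  nra. }
set (w := / v).
assert (Hw : v * w = 1) by (unfold w; field; lra).
assert (Hw0 : 0 < w) by (unfold w; apply Rinv_0_lt_compat; lra).
unfold Rdiv. fold w. split; [lra|]. split; [split|]; nra.
Qed.

Lemma f_small t : 0 < t < 1 -> Defs.f t <= / (- ln t).
Proof.
intros Ht. unfold Defs.f.
set (u := exp (-t)).
assert (Hu0 : 0 < u) by apply exp_pos.
assert (Hu1 : u < 1) by (unfold u; rewrite <- exp_0; apply exp_increasing; lra).
assert (Hut : 1 - u <= t) by (pose proof (exp_ge1 (-t)); unfold u; lra).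
assert (Hlt : ln t < 0) by (rewrite <- ln_1; apply ln_increasing; lra).
assert (Hle : ln (1-u) <= ln t) by (apply ln_le; lra).
set (v := - ln (1 - u)).
assert (0 < - ln t) by lra.
assert (/ v <= / (- ln t)) by (apply Rinv_le_contravar; unfold v; lra).
assert (0 < / v) by (apply Rinv_0_lt_compat; unfold v; lra).
unfold Rdiv. fold v. nra.
Qed.

Lemma pointwise x t : 0 < t -> t <= x ->
  0 <= integrand x t <= ln (1 + x - t) /\
  ln (1 + x - t) - exp (-t) * (ln (1 + x) + 1) <= integrand x t.
Proof.
intros Ht Htx. unfold integrand.
destruct (f_facts t Ht) as [[Hu0 Hu1] [[Hg Hh] Hh0]].
set (h := Defs.f t) in *. set (u := exp (-t)) in *.
set (s := x - t).
set (g := 1 - u).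
assert (Hs : 0 <= s) by (unfold s; lra).
assert (E : 1 + x - t = 1 + s) by (unfold s; ring). rewrite E.
set (A := ln (1 + s * h)). set (B := ln (1 + s * g)).
assert (HAB : B <= A) by (apply ln_le; unfold g; nra).
assert (HB0 : 0 <= B) by (rewrite <- ln_1; apply ln_le; unfold g; nra).
assert (HA1 : A <= ln (1 + s)) by (apply ln_le; nra).
assert (Hl0 : 0 <= ln (1 + s)) by (rewrite <- ln_1; apply ln_le; lra).
assert (Hlx : ln (1 + s) <= ln (1 + x)) by (apply ln_le; unfold s; lra).
assert (HBg : ln g + ln (1 + s) <= B).
{ rewrite <- ln_mult by (unfold g; lra). apply ln_le. unfold g; nra. unfold g; nra. }
assert (Hlg : g * ln g >= g - 1).
{ pose proof (ln_le_sub1 (/ g)). rewrite ln_Rinv in H by (unfold g; lra).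
  assert (g * / g = 1) by (field; unfold g; lra). unfold g in *. nra. }
split; [split|].
- apply Rmult_le_pos; lra.
- nra.
- assert (B * g <= A * h) by (unfold g in *; nra).
  unfold g in *. nra.
Qed.

Lemma fd z : 0 < z -> ex_derive Defs.f z.
Proof.
intros Hz. destruct (f_facts z Hz) as [[Hu0 Hu1] _].
assert (ln (1 - exp (-z)) < ln 1) by (apply ln_increasing; lra). rewrite ln_1 in H.
unfold Defs.f. auto_derive. replace (1 + - exp (-z)) with (1 - exp (-z)) by ring. repeat split; lra.
Qed.

Lemma intd x z : 0 < z -> z <= x -> ex_derive (integrand x) z.
Proof.
intros Hz Hzx. destruct (f_facts z Hz) as [_ [_ Hf]].
pose proof (fd z Hz). unfold integrand. auto_derive. repeat split; auto; nra.
Qed.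

Definition gfun x t := if Rle_dec t 0 then 0 else integrand x t.

Lemma g_cont0 x : 0 < x -> continuous (gfun x) 0.
Proof.
intros Hx. apply continuity_pt_filterlim.
intros eps Heps.
exists (Rmin 1 (Rmin x (exp (- (x / eps))))).
split. { apply Rmin_pos; [lra| apply Rmin_pos; [lra| apply exp_pos]]. }
intros t [_ Ht]. simpl in Ht |- *. unfold R_dist in *. unfold gfun.
destruct (Rle_dec 0 0) as [_|n]; [|lra].
destruct (Rle_dec t 0) as [_|n]. rewrite Rminus_0_r, Rabs_R0; lra.
rewrite Rminus_0_r in Ht. rewrite Rabs_right in Ht by lra.
assert (Ht1 : t < 1) by (eapply Rlt_le_trans; [apply Ht| apply Rmin_l]).
assert (Ht2 : t < x) by (eapply Rlt_le_trans; [apply Ht| eapply Rle_trans; [apply Rmin_r| apply Rmin_l]]).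
assert (Ht3 : t < exp (- (x/eps))) by (eapply Rlt_le_trans; [apply Ht| eapply Rle_trans; [apply Rmin_r| apply Rmin_r]]).
assert (Htp : 0 < t) by lra.
destruct (pointwise x t Htp (Rlt_le _ _ Ht2)) as [[H0 _] _].
rewrite Rminus_0_r, Rabs_right by lra.
unfold integrand in *.
destruct (f_facts t Htp) as [_ [[_ Hf1] Hf0]].
pose proof (f_small t (conj Htp Ht1)) as Hs.
set (h := Defs.f t) in *.
assert (Hl : ln (1 + (x - t) * h) <= (x - t) * h) by (pose proof (ln_le_sub1 (1 + (x-t)*h)); nra).
assert (Hlt : ln t < - (x / eps)) by (rewrite <- (ln_exp (- (x/eps))); apply ln_increasing; lra).
assert (0 < x / eps) by (apply Rdiv_lt_0_compat; lra).
assert (/ (- ln t) < eps / x).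
{ replace (eps / x) with (/ (x / eps)) by (field; lra). apply Rinv_lt_contravar; nra. }
assert (h < eps / x) by lra.
assert (x * (eps / x) = eps) by (field; lra).
assert (ln (1 + (x - t) * h) * h <= (x - t) * h * h) by (apply Rmult_le_compat_r; lra).
assert ((x - t) * h * h <= x * h) by nra.
assert (x * h < x * (eps / x)) by (apply Rmult_lt_compat_l; lra).
lra.
Qed.

Lemma ex_int x : 0 < x -> ex_RInt (integrand x) 0 x.
Proof.
intros Hx. apply ex_RInt_ext with (gfun x).
{ rewrite Rmin_left, Rmax_right by lra. intros t Ht. unfold gfun.
  destruct (Rle_dec t 0); [lra|auto]. }
apply (ex_RInt_continuous (V:=R_CompleteNormedModule)). rewrite Rmin_left, Rmax_right by lra.
intros z [Hz0 Hzx]. destruct Hz0 as [Hz0| <-]; [|apply g_cont0; auto].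
apply (@continuous_ext_loc R_UniformSpace R_UniformSpace (gfun x) (integrand x)).
- exists (mkposreal z Hz0). intros y Hy. unfold gfun.
  destruct (Rle_dec y 0); [|auto].
  exfalso. change (Rabs (y - z) < z) in Hy. apply Rabs_def2 in Hy. lra.
- apply (ex_derive_continuous (K:=R_AbsRing) (V:=R_NormedModule)), intd; auto.
Qed.

Lemma intL x K : 0 < x ->
  is_RInt (fun t => ln (1 + x - t) - exp (-t) * K) 0 x
    ((1 + x) * ln (1 + x) - x - (1 - exp (-x)) * K).
Proof.
intros Hx.
set (F := fun t => - ((1 + x - t) * ln (1 + x - t) - (1 + x - t)) + exp (-t) * K).
assert (H := is_RInt_derive F (fun t => ln (1 + x - t) - exp (-t) * K) 0 x).
rewrite Rmin_left, Rmax_right in H by lra.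
replace ((1 + x) * ln (1 + x) - x - (1 - exp (-x)) * K) with (minus (F x) (F 0)).
apply H.
- intros t Ht. unfold F. auto_derive. lra. replace (1 + x + - t) with (1 + x - t) by ring. field. lra.
- intros t Ht. apply (ex_derive_continuous (K:=R_AbsRing) (V:=R_NormedModule)).
  auto_derive. lra.
- unfold F, minus, plus, opp; simpl.
  replace (1 + x - x) with 1 by ring. replace (1 + x - 0) with (1 + x) by ring.
  rewrite ln_1, Ropp_0, exp_0. ring.
Qed.

Theorem mainTheorem8 :
  exists C M : R, forall x : R, M <= x ->
    ex_RInt (integrand x) 0 x /\
    Rabs (RInt (integrand x) 0 x - (x * ln x - x)) <= C * ln x.
Proof.
exists 3, (exp 1). intros x Hx.
assert (He : 2 < exp 1) by (pose proof (exp_ineq1 1); lra).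
assert (Hx0 : 0 < x) by lra.
assert (Hlx : 1 <= ln x) by (rewrite <- (ln_exp 1); apply ln_le; [apply exp_pos|lra]).
assert (Hex := ex_int x Hx0). split; [auto|].
set (K := ln (1 + x) + 1).
assert (HU := intL x 0 Hx0). assert (HL := intL x K Hx0).
assert (Hup : RInt (integrand x) 0 x <= (1 + x) * ln (1 + x) - x - (1 - exp (-x)) * 0).
{ rewrite <- (is_RInt_unique _ _ _ _ HU). apply RInt_le; [lra|auto|eexists; eauto|].
  intros t Ht. destruct (pointwise x t ltac:(lra) ltac:(lra)) as [[_ H] _]. lra. }
assert (Hlo : (1 + x) * ln (1 + x) - x - (1 - exp (-x)) * K <= RInt (integrand x) 0 x).
{ rewrite <- (is_RInt_unique _ _ _ _ HL). apply RInt_le; [lra|eexists; eauto|auto|].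
  intros t Ht. destruct (pointwise x t ltac:(lra) ltac:(lra)) as [_ H]. fold K in H. lra. }
set (I := RInt (integrand x) 0 x) in *.
assert (Hl1 : 0 <= ln (1 + x)) by (rewrite <- ln_1; apply ln_le; lra).
assert (Hex0 : 0 < exp (-x)) by apply exp_pos.
assert (Hd : ln (1 + x) - ln x <= / x).
{ assert (E : ln ((1 + x) * / x) = ln (1 + x) - ln x).
  { rewrite ln_mult, ln_Rinv by (try apply Rinv_0_lt_compat; lra). ring. }
  rewrite <- E. pose proof (ln_le_sub1 ((1 + x) * / x)).
  assert (0 < (1+x) * / x) by (apply Rmult_lt_0_compat; [lra| apply Rinv_0_lt_compat; lra]).
  replace ((1 + x) * / x - 1) with (/ x) in H by (field; lra). lra. }
assert (Hd0 : ln x <= ln (1 + x)) by (apply ln_le; lra).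
assert (Hxd : x * (ln (1 + x) - ln x) <= 1).
{ assert (x * / x = 1) by (field; lra). nra. }
assert (Hl2 : ln (1 + x) <= ln 2 + ln x).
{ rewrite <- ln_mult by lra. apply ln_le; lra. }
assert (Hln2 : ln 2 < 1) by (rewrite <- (ln_exp 1); apply ln_increasing; lra).
rewrite Rmult_0_r in Hup.
assert (0 <= exp (-x) * K) by (apply Rmult_le_pos; unfold K; lra).
assert (E1 : (1 - exp (-x)) * K = K - exp (-x) * K) by ring.
assert (E2 : (1 + x) * ln (1 + x) - x - (x * ln x - x) = ln (1 + x) + x * (ln (1 + x) - ln x)) by ring.
assert (0 <= x * (ln (1 + x) - ln x)) by nra.
unfold K in *. apply Rabs_le. lra.
Qed.
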